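(* Let $\odot$ be a pseudo-multiplication on $[0,\infty]$ and let $\phi$ be the supremum of the set of $\odot$-finite elements. Then there do not exist $t,t'\in[0,\infty]$ with $t<\phi<t'$ and $t\odot t'=\phi$.
   Context: A pseudo-multiplication is a binary operation $\odot:[0,\infty]\times[0,\infty]\to[0,\infty]$ such that: $\odot$ is associative; $\odot$ is continuous on $(0,\infty)\times[0,\infty]$; for every $t$, the map $s\mapsto s\odot t$ is continuous on $(0,\infty]$; $\odot$ is nondecreasing in each argument; there is a left identity element $1_{\odot}$, i.e. $1_{\odot}\odot t=t$ for all $t$; there are no zero divisors, i.e. $s\odot t=0$ implies $s=0$ or $t=0$; and $0$ is an annihilator, i.e. $0\odot t=t\odot 0=0$ for all $t$. For $t\in[0,\infty]$ put $O(t)=\inf_{s>0} s\odot t$. An element $t$ is called $\odot$-finite if $O(t)=0$. *)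

(* Defs.v *)
From HB Require Import structures.
From mathcomp Require Import all_boot all_order all_algebra.
From mathcomp Require Import all_classical all_reals all_analysis.
Set Implicit Arguments. Unset Strict Implicit. Unset Printing Implicit Defensive.
Import Order.TTheory GRing.Theory Num.Theory.
Local Open Scope classical_set_scope.
Local Open Scope ereal_scope.

Definition Ipos (R : realType) : set (\bar R) := [set x | 0 <= x].

(* pseudo-multiplication on [0, +oo]; the operation is a total function on \bar R,
   and all axioms are imposed on arguments in [0, +oo] only. *)
Definition pseudo_mult (R : realType) (op : \bar R -> \bar R -> \bar R) : Prop :=
  (
      (forall s t, 0 <= s -> 0 <= t -> 0 <= op s t) /\
      (forall r s t, 0 <= r -> 0 <= s -> 0 <= t -> op (op r s) t = op r (op s t)) /\
      {within [set p : \bar R * \bar R | (0 < p.1 < +oo) /\ 0 <= p.2],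
         continuous (fun p => op p.1 p.2)} /\
      (forall t, 0 <= t -> {within [set s : \bar R | 0 < s], continuous (fun s => op s t)}) /\
      (forall s s' t, 0 <= s -> s <= s' -> 0 <= t -> op s t <= op s' t) /\
      (forall s t t', 0 <= s -> 0 <= t -> t <= t' -> op s t <= op s t') /\
      (exists2 e, 0 <= e & forall t, 0 <= t -> op e t = t) /\
      (forall s t, 0 <= s -> 0 <= t -> op s t = 0 -> s = 0 \/ t = 0) /\
      (forall t, 0 <= t -> op 0 t = 0 /\ op t 0 = 0)).

Definition Oinf (R : realType) (op : \bar R -> \bar R -> \bar R) (t : \bar R) : \bar R :=
  ereal_inf [set op s t | s in [set s : \bar R | 0 < s]].

Definition odot_finite (R : realType) (op : \bar R -> \bar R -> \bar R) (t : \bar R) : Prop :=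
  0 <= t /\ Oinf op t = 0.

Definition phi_of (R : realType) (op : \bar R -> \bar R -> \bar R) : \bar R :=
  ereal_sup [set t | odot_finite op t].

(* Main.v *)
Require Import Defs.
From mathcomp Require Import all_boot all_order all_algebra.
From mathcomp Require Import all_classical all_reals all_analysis.
Import Order.TTheory GRing.Theory Num.Theory.
Local Open Scope classical_set_scope.
Local Open Scope ereal_scope.

Lemma cont_contra (R : realType) (op : \bar R -> \bar R -> \bar R) (a d : R) :
  {within [set p : \bar R * \bar R | (0 < p.1 < +oo) /\ 0 <= p.2],
         continuous (fun p => op p.1 p.2)} ->
  (0 < a)%R -> op a%:E 0 = 0 -> (0 < d)%R ->
  exists u : R, (0 < u)%R /\ op a%:E u%:E < d%:E.
Proof.
move=> hc a0 ha0 d0.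
have HA : [set p : \bar R * \bar R | (0 < p.1 < +oo) /\ 0 <= p.2] (a%:E, 0).
  by rewrite /= lte_fin a0 ltry lexx.
have := (@subspace_continuousP _ _ _ (fun p : \bar R * \bar R => op p.1 p.2)).1 hc _ HA.
move=> /(_ [set y | y < d%:E]).
have : nbhs (op a%:E 0) [set y | y < d%:E].
  apply: open_nbhs_nbhs; split; first exact: open_ereal_lt_ereal.
  by rewrite /= ha0 lte_fin.
move=> H /(_ H) {H}.
rewrite /= => -[[N1 N2] /= [N1a N2b] HN].
move: N2b => /nbhs_EFin /nbhs_ballP [e e0 He].
exists (e / 2)%R; split; first by rewrite divr_gt0.
have hb : N2 (e / 2)%R%:E.
  apply: He; rewrite /ball_ /= sub0r normrN gtr0_norm ?divr_gt0 //.
  by rewrite ltr_pdivrMr // ltr_pMr // ltr1n.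
have := HN (a%:E, (e/2)%:E); apply => //=.
  split => //; exact: nbhs_singleton.
by rewrite lte_fin a0 ltry lee_fin ltW // divr_gt0.
Qed.

Theorem corollary2p9 (R : realType) (op : \bar R -> \bar R -> \bar R) :
  pseudo_mult op ->
  ~ (exists t t' : \bar R,
        [/\ 0 <= t, t < phi_of op, phi_of op < t' & op t t' = phi_of op]).
Proof.
move=> [hcl [hass [hcont [hcont1 [hmon1 [hmon2 [[e he0 he] [hzd hann]]]]]]]].
set phi := phi_of op.
move=> [t [t' [t0 tphi phit' htt']]].
have phi0 : 0 < phi by exact: le_lt_trans tphi.
have t'0 : 0 <= t' by apply/ltW/(lt_trans phi0).
have phioo : phi < +oo by exact: lt_le_trans phit' (leey _).
have tn0 : t != 0.
  apply/eqP => t0'; move: htt'; rewrite t0' (hann _ t'0).1 => h.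
  by move: phi0; rewrite -h ltxx.
have tp : 0 < t by rewrite lt_neqAle eq_sym tn0 t0.
set c := Oinf op t'.
have c0 : 0 <= c.
  apply: le_ereal_inf_tmp => x [s /= s0 <-]; apply: hcl => //; exact: ltW.
have cn0 : c != 0.
  apply/eqP => hc; have : [set t | odot_finite op t] t' by split.
  move/ereal_sup_ubound; rewrite -/(phi_of op) -/phi => h.
  by move: (lt_le_trans phit' h); rewrite ltxx.
have cp : 0 < c by rewrite lt_neqAle eq_sym cn0 c0.
have clb : forall r, 0 < r -> c <= op r t'.
  by move=> r r0; apply: ereal_inf_lbound; exists r.
have key : forall u, 0 < u -> phi <= op t' u.
  move=> u u0.
  have w0 : 0 <= op t' u by apply: hcl => //; exact: ltW.
  rewrite leNgt; apply/negP => hw.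
  have [v [v0 hv] wv] := ereal_sup_gt hw.
  have h1 : Oinf op (op t' u) <= 0.
    rewrite -hv; apply: le_ereal_inf_tmp => x [s /= s0 <-].
    apply: (@le_trans _ _ (op s (op t' u))).
      by apply: ereal_inf_lbound; exists s.
    by apply: hmon2 => //; [exact: ltW | exact: ltW].
  have cu0 : 0 < op c u.
    rewrite lt_neqAle hcl ?andbT //; last exact: ltW.
    apply/eqP => /esym /hzd.
    case => //; [exact: ltW | by move=> c0'; move: cn0; rewrite c0' eqxx |].
    by move=> u0'; move: u0; rewrite u0' ltxx.
  have h2 : op c u <= Oinf op (op t' u).
    apply: le_ereal_inf_tmp => x [s /= s0 <-].
    rewrite -hass //; [|exact: ltW|exact: ltW].
    apply: hmon1 => //; [exact: clb | exact: ltW].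
  by move: (lt_le_trans cu0 (le_trans h2 h1)); rewrite ltxx.
set d := op t phi.
have dp : 0 < d.
  rewrite lt_neqAle hcl ?andbT //; [|exact: ltW].
  apply/eqP => /esym /hzd.
  case => //; [exact: ltW | by move=> h; move: tn0; rewrite h eqxx |].
  by move=> h; move: phi0; rewrite h ltxx.
have hge : forall u, 0 < u -> d <= op phi u.
  move=> u u0; rewrite -htt' hass //; [|exact: ltW].
  apply: hmon2 => //; [exact: ltW | exact: key].
have [d' [d'0 hd']] : exists d' : R, (0 < d')%R /\ d'%:E <= d.
  move: dp; rewrite /d; case: (op t phi) => [r| |] //.
  - by move=> r0; exists r; split => //; rewrite -lte_fin.
  - by move=> _; exists 1%R; split => //; exact: leey.
have phifin : phi \is a fin_num by rewrite ge0_fin_numE // ltW.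
have hpa : (0 < fine phi)%R by rewrite -lte_fin fineK.
have [u [u0 hu]] := @cont_contra R op (fine phi) d' hcont hpa ltac:(rewrite fineK //; exact: (proj2 (hann _ (ltW phi0)))) d'0.
move: hu; rewrite fineK // => hu.
have := hge u%:E; rewrite lte_fin => /(_ u0) h.
by move: (lt_le_trans hu (le_trans hd' h)); rewrite ltxx.
Qed.
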